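(* Let $f\in\mathbb{Z}[x]$ and $n\in\mathbb{Z}_{\geq1}$, and suppose that $f^n(x)-x$ is a nonzero polynomial with no repeated roots. Then for every $j\in\mathbb{Z}_{\geq0}$ and all but finitely many primes $p$: the dynamical system $(\mathbb{F}_p,[f]_p)$ has precisely $j$ cycles of length $n$ if and only if $[\Phi_{f,n}]_p$ has precisely $jn$ roots in $\mathbb{F}_p$.
   Context: For $f\in\mathbb{Z}[x]$ and a prime $p$, $[f]_p\in\mathbb{F}_p[x]$ is the reduction of $f$ mod $p$ (similarly for polynomials with $p$-integral rational coefficients, which holds for all but finitely many $p$). $f^n$ denotes the $n$-fold composite. For a map $g:S\to S$, a point $s$ has period $n$ if $n$ is the least positive integer with $g^n(s)=s$, and an $n$-cycle is the orbit $\{g^i(s):i\ge0\}$ of a point of period $n$. The $n$th dynatomic polynomial is $\Phi_{f,n}(x)=\prod_{d\mid n}(f^d(x)-x)^{\mu(n/d)}$ ($\mu$ the Möbius function); it is a polynomial in $\mathbb{Q}[x]$. *)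

(* Defs.v *)
From HB Require Import structures.
From mathcomp Require Import all_boot all_order all_algebra all_field.
Set Implicit Arguments. Unset Strict Implicit. Unset Printing Implicit Defensive.
Import Order.TTheory GRing.Theory Num.Theory.
Local Open Scope ring_scope.

Definition moebius (n : nat) : int :=
  if all (fun q => logn q n == 1%N) (primes n) then (-1) ^+ size (primes n) else 0.

Definition iterp (R : nzRingType) (n : nat) (f : {poly R}) : {poly R} :=
  iter n (fun q => f \Po q) 'X.

(* n-th dynatomic polynomial prod_{d|n} (f^d - X)^{mu(n/d)}, computed as the
   (exact) quotient of the factors with exponent +1 by those with exponent -1. *)
Definition dynatomic (F : fieldType) (f : {poly F}) (n : nat) : {poly F} :=
  (\prod_(d <- divisors n | moebius (n %/ d) == 1) (iterp d f - 'X)) %/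
  (\prod_(d <- divisors n | moebius (n %/ d) == -1) (iterp d f - 'X)).

(* reduction mod p of a rational number (meaningful when p does not divide
   the denominator) and of polynomials *)
Definition ratmodp (p : nat) (q : rat) : 'F_p :=
  (numq q)%:~R / (denq q)%:~R.
Definition redq (p : nat) (P : {poly rat}) : {poly 'F_p} := map_poly (ratmodp p) P.
Definition redz (p : nat) (P : {poly int}) : {poly 'F_p} := map_poly intr P.

Definition has_period (T : finType) (g : T -> T) (n : nat) (s : T) : bool :=
  [&& (0 < n)%N, iter n g s == s &
      [forall m : 'I_n, (0 < m)%N ==> (iter m g s != s)]].

Definition ncycles (T : finType) (g : T -> T) (n : nat) : {set {set T}} :=
  [set [set y | fconnect g s y] | s in [set s | has_period g n s]].

(* Main.v *)
Require Import Defs.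
From HB Require Import structures.
From mathcomp Require Import all_boot all_order all_algebra all_field.
From mathcomp Require Import ring zify.
Import Order.TTheory GRing.Theory Num.Theory.
Local Open Scope ring_scope.


Lemma iterpS (R : nzRingType) d (f : {poly R}) : iterp d.+1 f = f \Po iterp d f.
Proof. by []. Qed.

Lemma iterp0 (R : nzRingType) (f : {poly R}) : iterp 0 f = 'X.
Proof. by []. Qed.

Lemma iterpD (R : comNzRingType) a b (f : {poly R}) :
  iterp (a + b) f = iterp a f \Po iterp b f.
Proof.
elim: a => [|a IH]; first by rewrite add0n iterp0 comp_polyX.
by rewrite addSn !iterpS IH comp_polyA.
Qed.

Lemma iterp_map (R S : nzRingType) (phi : {rmorphism R -> S}) d (f : {poly R}) :
  map_poly phi (iterp d f) = iterp d (map_poly phi f).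
Proof.
elim: d => [|d IH]; first by rewrite !iterp0 map_polyX.
by rewrite !iterpS map_comp_poly IH.
Qed.

Lemma horner_iterp (R : comNzRingType) d (f : {poly R}) x :
  (iterp d f).[x] = iter d (fun y => f.[y]) x.
Proof.
elim: d => [|d IH]; first by rewrite iterp0 hornerX.
by rewrite iterpS horner_comp IH.
Qed.

Lemma dvdp_comp_sub (K : fieldType) (p q r : {poly K}) :
  (q - r) %| ((p \Po q) - (p \Po r)).
Proof.
elim/poly_ind: p => [|p c IH]; first by rewrite !comp_poly0 subr0 dvdp0.
rewrite !comp_polyD !comp_polyC !comp_polyM !comp_polyX.
have E : forall a b : {poly K}, a * q + c%:P - (b * r + c%:P) =
   (a - b) * q + b * (q - r) by move=> a b; ring.
rewrite E.
by apply: dvdp_add; [apply: dvdp_mulr | apply: dvdp_mulIr].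
Qed.

Lemma dvd_iterp (K : fieldType) (f : {poly K}) d n : (d %| n)%N ->
  iterp d f - 'X %| iterp n f - 'X.
Proof.
case/dvdnP=> k ->; elim: k => [|k IH]; first by rewrite mul0n subrr dvdp0.
rewrite mulSn iterpD.
have -> : (iterp d f \Po iterp (k * d) f) - 'X =
  ((iterp d f \Po iterp (k * d) f) - (iterp d f \Po 'X)) + (iterp d f - 'X).
  by rewrite comp_polyXr addrA subrK.
by rewrite dvdp_add // (dvdp_trans IH) // dvdp_comp_sub.
Qed.


Definition sqf (c : nat) := all (fun q => logn q c == 1%N) (primes c).

Lemma moebiusE c : moebius c = if sqf c then (-1) ^+ size (primes c) else 0.
Proof. by []. Qed.

Lemma moebius_mulp c q : (0 < c)%N -> prime q -> ~~ (q %| c)%N ->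
  moebius (c * q) = - moebius c.
Proof.
move=> c0 pq nqc; have q0 := prime_gt0 pq.
have qNc : q \notin primes c by rewrite mem_primes pq c0.
have pe : perm_eq (primes (c * q)) (q :: primes c).
  apply: uniq_perm; first exact: primes_uniq.
    by rewrite /= qNc primes_uniq.
  move=> r; rewrite primesM // (primes_prime pq) !inE orbC.
  by [].
rewrite !moebiusE /sqf (perm_all _ pe) (perm_size pe) /=.
rewrite lognM // (logn_prime _ pq) eqxx.
have -> : logn q c = 0%N by apply/eqP; rewrite -leqn0 leqNgt logn_gt0.
rewrite add0n eqxx /=.
have -> : all (fun r => logn r (c * q) == 1%N) (primes c) =
          all (fun r => logn r c == 1%N) (primes c).
  apply: eq_in_all => r rc; rewrite lognM // (logn_prime _ pq).
  have -> : (r == q) = false.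
    by apply/negP=> /eqP rq; rewrite rq (negPf qNc) in rc.
  by rewrite addn0.
by case: ifP => _; rewrite ?oppr0 // exprS mulN1r.
Qed.

Lemma moebius_divp c q : (0 < c)%N -> prime q -> (q %| c)%N -> sqf c ->
  ~~ (q %| c %/ q)%N /\ moebius (c %/ q) = - moebius c.
Proof.
move=> c0 pq qc sq; have q0 := prime_gt0 pq.
have cq0 : (0 < c %/ q)%N by rewrite divn_gt0 // dvdn_leq.
have nq : ~~ (q %| c %/ q)%N.
  have : q \in primes c by rewrite mem_primes pq c0.
  move/(allP sq) => /eqP.
  rewrite -{1}(divnK qc) lognM // (logn_prime _ pq) eqxx => /eqP.
  rewrite -[1%N]add0n eqn_add2r => /eqP l0.
  apply/negP => qd; have : q \in primes (c %/ q) by rewrite mem_primes pq cq0.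
  by rewrite -logn_gt0 l0.
split=> //; have := @moebius_mulp (c %/ q) q cq0 pq nq; rewrite divnK // => ->.
by rewrite opprK.
Qed.


Lemma moebius_sqf c : moebius c != 0 -> sqf c.
Proof. by rewrite moebiusE; case: ifP => //; rewrite eqxx. Qed.

Lemma mem_div k c : (0 < k)%N -> (c \in divisors k) = (c %| k)%N.
Proof. by move=> k0; rewrite -dvdn_divisors. Qed.

Lemma mu_count k : (0 < k)%N ->
  count (fun c => moebius c == 1%R) (divisors k) =
  (count (fun c => moebius c == (-1)%R) (divisors k) + (k == 1%N))%N.
Proof.
move=> k0; case: (ltngtP k 1) => [|k1|->]; last by [].
  by rewrite ltnS leqn0 => /eqP k00; rewrite k00 in k0.
set q := pdiv k; have pq : prime q by rewrite pdiv_prime.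
have qk : (q %| k)%N by rewrite pdiv_dvd.
have q0 := prime_gt0 pq.
pose phi c := if (q %| c)%N then (c %/ q)%N else (c * q)%N.
have Hphi : forall c, (c %| k)%N -> moebius c != 0 ->
   [/\ (phi c %| k)%N, moebius (phi c) = - moebius c & phi (phi c) = c].
  move=> c ck mc; have c0 : (0 < c)%N.
    by case: c ck {mc} => //; rewrite dvd0n => /eqP k00; rewrite k00 in k0.
  rewrite /phi; case: ifP => qc.
    have [nq mq] := @moebius_divp c q c0 pq qc (moebius_sqf c mc).
    rewrite (negPf nq) divnK //; split=> //.
    by apply: dvdn_trans ck; apply: dvdn_div.
  rewrite dvdn_mull // mulnK //; split=> //.
    by rewrite Gauss_dvd ?ck // coprime_sym prime_coprime // qc.
  by rewrite moebius_mulp // qc.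
rewrite addn0.
rewrite -!size_filter.
set s1 := filter _ _; set s2 := filter _ _.
have ps : perm_eq s2 (map phi s1).
  apply: uniq_perm; first by rewrite filter_uniq ?divisors_uniq.
    rewrite map_inj_in_uniq ?filter_uniq ?divisors_uniq //.
    move=> a b; rewrite !mem_filter !mem_div // => /andP[ma ak] /andP[mb bk] e.
    have [_ _ <-] := Hphi a ak (negbT (ltac:(by rewrite (eqP ma)) : (moebius a == 0) = false)).
    have [_ _ <-] := Hphi b bk (negbT (ltac:(by rewrite (eqP mb)) : (moebius b == 0) = false)).
    by rewrite e.
  move=> c; apply/idP/idP.
    rewrite mem_filter mem_div // => /andP[mc ck].
    have mc0 : moebius c != 0 by rewrite (eqP mc).
    have [pk mp pp] := Hphi c ck mc0.
    rewrite -pp; apply: map_f; rewrite mem_filter mem_div // pk mp (eqP mc) opprK eqxx.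
    by [].
  case/mapP=> a; rewrite mem_filter mem_div // => /andP[ma ak] ->.
  have ma0 : moebius a != 0 by rewrite (eqP ma).
  have [pk mp _] := Hphi a ak ma0.
  by rewrite mem_filter mem_div // pk mp (eqP ma) eqxx.
by rewrite (perm_size ps) size_map.
Qed.


Lemma divn_gt0' n d : (0 < n)%N -> (d %| n)%N -> (0 < n %/ d)%N.
Proof. by move=> n0 dn; rewrite divn_gt0 ?(dvdn_gt0 n0 dn) // dvdn_leq. Qed.

Lemma count_reindex n m (Q : pred nat) : (0 < n)%N -> (m %| n)%N ->
  count (fun d => Q (n %/ d)%N && (m %| d)%N) (divisors n) =
  count Q (divisors (n %/ m)).
Proof.
move=> n0 mn; set k := (n %/ m)%N; have k0 : (0 < k)%N by exact: divn_gt0'.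
have m0 : (0 < m)%N := dvdn_gt0 n0 mn.
rewrite (@eq_in_count _ _ (fun d => Q (n %/ d)%N && (n %/ d %| k)%N)); last first.
  move=> d; rewrite mem_div // => dn; congr (_ && _).
  have e0 : (0 < n %/ d)%N by exact: divn_gt0'.
  rewrite -(@dvdn_pmul2r (n %/ d) m d e0) -(@dvdn_pmul2r m (n %/ d) k m0) (mulnC d) divnK //.
  by rewrite /k divnK // mulnC.
have inv : {in divisors n, forall d, (n %/ (n %/ d))%N = d}.
  move=> d; rewrite mem_div // => dn.
  by rewrite -{1}(divnK dn) mulKn // divn_gt0'.
have pe : perm_eq (map (fun d => n %/ d)%N (divisors n)) (divisors n).
  apply: uniq_perm.
  - rewrite map_inj_in_uniq ?divisors_uniq //.
    by move=> a b ha hb e; rewrite -(inv a ha) -(inv b hb) e.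
  - exact: divisors_uniq.
  - move=> x; apply/mapP/idP.
      by case=> d; rewrite !mem_div // => dn ->; rewrite dvdn_div.
    move=> xn; exists (n %/ x)%N; last by rewrite inv.
    by rewrite mem_div // dvdn_div // -(@mem_div n x n0).
rewrite -(count_map (fun d => n %/ d)%N (fun e => Q e && (e %| k)%N)).
rewrite (permP pe).
rewrite -(count_filter Q (fun e => (e %| k)%N)).
apply/permP; apply: uniq_perm; first by rewrite filter_uniq ?divisors_uniq.
  exact: divisors_uniq.
move=> e; rewrite mem_filter !mem_div //; apply/andP/idP => [[//]|ek].
by split=> //; apply: dvdn_trans ek _; apply: dvdn_div.
Qed.

Lemma comb n m : (0 < n)%N -> (m %| n)%N ->
  count (fun d => (moebius (n %/ d) == 1%R) && (m %| d)%N) (divisors n) =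
  (count (fun d => (moebius (n %/ d) == (-1)%R) && (m %| d)%N) (divisors n)
   + (m == n))%N.
Proof.
move=> n0 mn; rewrite (@count_reindex n m (fun c => moebius c == 1%R)) // (@count_reindex n m (fun c => moebius c == (-1)%R)) //.
rewrite mu_count ?divn_gt0' //; congr (_ + _)%N.
have m0 : (0 < m)%N := dvdn_gt0 n0 mn.
congr nat_of_bool.
apply/eqP/eqP => [e|e]; last by rewrite e divnn (leq_trans m0 (dvdn_leq n0 mn)). idtac.
by rewrite -(divnK mn) e mul1n.
Qed.

Set Implicit Arguments. Unset Strict Implicit. Unset Printing Implicit Defensive.


Definition Fd (R : nzRingType) (g : {poly R}) d := iterp d g - 'X.
Definition PP (R : nzRingType) (g : {poly R}) n :=
  \prod_(d <- divisors n | moebius (n %/ d) == 1) Fd g d.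
Definition QQ (R : nzRingType) (g : {poly R}) n :=
  \prod_(d <- divisors n | moebius (n %/ d) == -1) Fd g d.
Definition perb (T : eqType) (h : T -> T) n x :=
  (iter n h x == x) && [forall m : 'I_n, (0 < m)%N ==> (iter m h x != x)].

Lemma iter_mul (T : Type) (h : T -> T) d k x : iter d h x = x -> iter (k * d) h x = x.
Proof. by move=> e; elim: k => [//|k IH]; rewrite mulSn iterD IH e. Qed.

Lemma iter_mod (T : Type) (h : T -> T) m d x : iter m h x = x ->
  iter d h x = iter (d %% m) h x.
Proof.
by move=> e; rewrite {1}(divn_eq d m) addnC iterD iter_mul.
Qed.

Lemma sum_count (I : Type) (s : seq I) (P : pred I) (b : pred I) :
  (\sum_(i <- s | P i) (b i : nat) = count (fun i => P i && b i) s)%N.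
Proof.
elim: s => [|i s IH]; first by rewrite big_nil.
by rewrite big_cons /= IH; case: (P i); case: (b i).
Qed.

Lemma mup_prod (K : fieldType) (I : eqType) (s : seq I) (P : pred I) (F : I -> {poly K}) x :
  {in s, forall i, P i -> F i != 0} ->
  \prod_(i <- s | P i) F i != 0 /\
  mup x (\prod_(i <- s | P i) F i) = (\sum_(i <- s | P i) mup x (F i))%N.
Proof.
elim: s => [|i s IH] nz.
  by rewrite !big_nil oner_eq0 mupNroot // root1.
have [IH1 IH2] : \prod_(i <- s | P i) F i != 0 /\
  mup x (\prod_(i <- s | P i) F i) = (\sum_(i <- s | P i) mup x (F i))%N.
  by apply: IH => j js; apply: nz; rewrite inE js orbT.
have nzi : P i -> F i != 0 by apply: nz; rewrite inE eqxx.
rewrite !big_cons; case Pi: (P i) => //.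
by rewrite mulf_neq0 ?nzi // mupM ?nzi // IH2.
Qed.

Section G.
Variable K : fieldType.
Variable g : {poly K}.
Variable n : nat.
Hypothesis n0 : (0 < n)%N.
Hypothesis sqS : forall x : K, ~~ (('X - x%:P) ^+ 2 %| Fd g n).

Let gh := fun y : K => g.[y].

Lemma S_neq0 : Fd g n != 0.
Proof. by apply/negP => /eqP e; have := sqS 0; rewrite e dvdp0. Qed.

Lemma Fd_dvd d : (d %| n)%N -> Fd g d %| Fd g n.
Proof. exact: dvd_iterp. Qed.

Lemma Fd_neq0 d : (d %| n)%N -> Fd g d != 0.
Proof.
move=> dn; apply/negP => /eqP e; have := Fd_dvd dn; rewrite e dvd0p.
by rewrite (negPf S_neq0).
Qed.

Lemma root_Fd d x : root (Fd g d) x = (iter d gh x == x).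
Proof. by rewrite /root /Fd hornerD hornerN hornerX horner_iterp subr_eq0. Qed.

Lemma mup_Fd d x : (d %| n)%N -> mup x (Fd g d) = (iter d gh x == x).
Proof.
move=> dn; have nz := Fd_neq0 dn.
case: (boolP (iter d gh x == x)) => e; last first.
  by rewrite mupNroot // root_Fd.
apply/eqP; rewrite eqn_leq mup_leq // -XsubC_dvd // dvdp_XsubCl root_Fd e andbT.
apply/negP => H; have := sqS x; rewrite (dvdp_trans H (Fd_dvd dn)).
by [].
Qed.

Lemma G_main x :
  [/\ PP g n != 0, QQ g n != 0 &
      mup x (PP g n) = (mup x (QQ g n) + perb gh n x)%N].
Proof.
have [P1 P2] := @mup_prod K _ (divisors n) (fun d => moebius (n %/ d) == 1) (Fd g) x
   (fun d dn _ => Fd_neq0 (ltac:(by rewrite -(@mem_div n d n0)) : (d %| n)%N)).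
have [Q1 Q2] := @mup_prod K _ (divisors n) (fun d => moebius (n %/ d) == -1) (Fd g) x
   (fun d dn _ => Fd_neq0 (ltac:(by rewrite -(@mem_div n d n0)) : (d %| n)%N)).
rewrite /PP /QQ; split=> //; rewrite P2 Q2.
have E1 : forall v : int,
  (\sum_(d <- divisors n | moebius (n %/ d) == v) mup x (Fd g d) =
   count (fun d => (moebius (n %/ d) == v) && (iter d gh x == x)) (divisors n))%N.
  move=> v; rewrite -(@sum_count _ _ (fun d => moebius (n %/ d) == v) (fun d => iter d gh x == x)).
  rewrite [LHS]big_seq_cond [RHS]big_seq_cond; apply: eq_bigr => d /andP[]; rewrite mem_div // => dn _.
  exact: mup_Fd.
rewrite !E1 /perb.
case: (boolP (iter n gh x == x)) => e; last first.
  have H0 : forall v : int, count (fun d => (moebius (n %/ d) == v) && (iter d gh x == x))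
     (divisors n) = 0%N.
    move=> v; rewrite (@eq_in_count _ _ pred0) ?count_pred0 // => d.
    rewrite mem_div // => dn /=; apply/negbTE; rewrite negb_and; apply/orP; right.
    apply: contra e => /eqP h; apply/eqP; rewrite -(divnK dn) iter_mul //.
  by rewrite !H0.
have exP : exists k, (0 < k)%N && (iter k gh x == x) by exists n; rewrite n0 e.
case: (ex_minnP exP) => m /andP[m0 em] mmin.
have Hd : forall d, (iter d gh x == x) = (m %| d)%N.
  move=> d; rewrite (iter_mod d (eqP em)) /dvdn; apply/eqP/eqP => [h|->//].
  apply/eqP; rewrite -leqn0 leqNgt; apply/negP => hp.
  have := mmin _ (ltac:(by rewrite hp h eqxx) : (0 < d %% m)%N && (iter (d %% m) gh x == x)).
  by rewrite leqNgt ltn_pmod.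
have mn : (m %| n)%N by rewrite -Hd.
rewrite (@eq_in_count _ _ (fun d => (moebius (n %/ d) == 1) && (m %| d)%N)); last first.
  by move=> d _; rewrite /= Hd.
rewrite (@eq_in_count _ (fun d => (moebius (n %/ d) == -1) && (iter d gh x == x)) (fun d => (moebius (n %/ d) == -1) && (m %| d)%N)); last first.
  by move=> d _; rewrite /= Hd.
rewrite comb // /=; congr (_ + _)%N; congr nat_of_bool.
apply/idP/idP.
  move/eqP=> mn'; apply/forallP => k; apply/implyP => k0; apply/negP => ek.
  have := mmin _ (ltac:(by rewrite k0 ek) : (0 < k)%N && (iter k gh x == x)).
  by rewrite mn' leqNgt ltn_ord.
move/forallP => H; have := dvdn_leq n0 mn; rewrite leq_eqVlt => /orP[//|mlt].
by have := H (Ordinal mlt); rewrite /= m0 em.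
Qed.
End G.


Lemma dvdp_prodXsubC (K : fieldType) (rs : seq K) (P : {poly K}) : P != 0 ->
  (forall x, (count_mem x rs <= mup x P)%N) -> \prod_(z <- rs) ('X - z%:P) %| P.
Proof.
elim: rs P => [|r rs IH] P P0 H; first by rewrite big_nil dvd1p.
have : (0 < mup r P)%N by apply: leq_trans (H r); rewrite /= eqxx.
rewrite -XsubC_dvd // => /divpK eP.
set P' := P %/ ('X - r%:P) in eP.
have P'0 : P' != 0 by apply: contraNneq P0; rewrite -eP => ->; rewrite mul0r.
rewrite big_cons -eP mulrC dvdp_mul //; apply: IH => // x.
have := H x; rewrite -eP mupM ?polyXsubC_eq0 // (@mup_XsubCX _ 1) /=.
by rewrite addnC leq_add2r.
Qed.

Lemma dvdp_mup_closed (K : closedFieldType) (P Q : {poly K}) : P != 0 -> Q != 0 ->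
  (forall x, (mup x Q <= mup x P)%N) -> Q %| P.
Proof.
move=> P0 Q0 H; have [rs eQ] := closed_field_poly_normal Q.
have lc0 : lead_coef Q != 0 by rewrite lead_coef_eq0.
rewrite eQ dvdpZl //; apply: dvdp_prodXsubC => // x.
rewrite -mu_prod_XsubC; apply: leq_trans (H x).
rewrite [X in (_ <= mup x X)%N]eQ -mul_polyC mupMr //.
by rewrite rootC.
Qed.

Lemma Fd_map (R S : nzRingType) (phi : {rmorphism R -> S}) (g : {poly R}) d :
  map_poly phi (Fd g d) = Fd (map_poly phi g) d.
Proof. by rewrite /Fd rmorphB /= iterp_map map_polyX. Qed.

Lemma PP_map (R S : nzRingType) (phi : {rmorphism R -> S}) (g : {poly R}) n :
  map_poly phi (PP g n) = PP (map_poly phi g) n.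
Proof. by rewrite /PP rmorph_prod; apply: eq_bigr => d _; exact: Fd_map. Qed.

Lemma QQ_map (R S : nzRingType) (phi : {rmorphism R -> S}) (g : {poly R}) n :
  map_poly phi (QQ g n) = QQ (map_poly phi g) n.
Proof. by rewrite /QQ rmorph_prod; apply: eq_bigr => d _; exact: Fd_map. Qed.

Lemma fC_eq (f : {poly int}) :
  map_poly ratr (map_poly intr f : {poly rat}) = (map_poly intr f : {poly algC}).
Proof. by rewrite -map_poly_comp; apply: eq_map_poly => z /=; rewrite ratr_int. Qed.

Lemma exact_dyn (f : {poly int}) n : (0 < n)%N ->
  (forall z : algC, ~~ (('X - z%:P) ^+ 2 %| iterp n (map_poly intr f : {poly algC}) - 'X)) ->
  dynatomic (map_poly intr f : {poly rat}) n * QQ (map_poly intr f : {poly rat}) n =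
  PP (map_poly intr f : {poly rat}) n.
Proof.
move=> n0 H; set fQ := (map_poly intr f : {poly rat}).
have H' : forall z : algC, ~~ (('X - z%:P) ^+ 2 %| Fd (map_poly ratr fQ) n).
  by move=> z; rewrite /fQ fC_eq; apply: H.
have [PC QC _] := G_main n0 H' 0.
have dv : QQ fQ n %| PP fQ n.
  rewrite -(dvdp_map (ratr : {rmorphism rat -> algC})) PP_map QQ_map; apply: dvdp_mup_closed => // x.
  by have [_ _ ->] := G_main n0 H' x; apply: leq_addr.
exact: divpK.
Qed.


Lemma double_root (K : fieldType) (S : {poly K}) z :
  root S z -> root S^`() z -> ('X - z%:P) ^+ 2 %| S.
Proof.
rewrite -dvdp_XsubCl => /divpK eS; set H := S %/ _ in eS.
rewrite -eS derivM derivXsubC mulr1 /root hornerD hornerM hornerXsubC subrr mulr0 add0r.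
rewrite -/(root H z) -dvdp_XsubCl => /divpK eH.
by rewrite -eH -mulrA -expr2 dvdp_mull.
Qed.

Lemma coprime_S (f : {poly int}) n :
  (forall z : algC, ~~ (('X - z%:P) ^+ 2 %| iterp n (map_poly intr f : {poly algC}) - 'X)) ->
  coprimep (Fd (map_poly intr f : {poly rat}) n) (Fd (map_poly intr f : {poly rat}) n)^`().
Proof.
move=> H; rewrite -(coprimep_map (ratr : {rmorphism rat -> algC})) -deriv_map Fd_map fC_eq.
set S := Fd _ n; rewrite /coprimep; apply/negPn/negP => /closed_rootP [z].
rewrite root_gcd => /andP[r1 r2].
by have := H z; rewrite (double_root r1 r2).
Qed.

Lemma bezoutZ (f : {poly int}) n :
  (forall z : algC, ~~ (('X - z%:P) ^+ 2 %| iterp n (map_poly intr f : {poly algC}) - 'X)) ->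
  exists U V : {poly int}, exists D : int, D != 0 /\
    U * Fd f n + V * (Fd f n)^`() = D%:P.
Proof.
move=> H; have /Bezout_eq1_coprimepP [u hu] := coprime_S H.
have [U1 [a a0 E1]] := rat_poly_scale u.1.
have [U2 [b b0 E2]] := rat_poly_scale u.2.
exists (b%:P * U1), (a%:P * U2), (a * b); split; first by rewrite mulf_neq0.
apply: (@map_inj_poly _ _ (intr : int -> rat)); [exact: intr_inj | by []|].
have e1 : map_poly intr U1 = (a%:~R)%:P * u.1 :> {poly rat}.
  by rewrite E1 mul_polyC scalerA mulfV ?scale1r // intr_eq0.
have e2 : map_poly intr U2 = (b%:~R)%:P * u.2 :> {poly rat}.
  by rewrite E2 mul_polyC scalerA mulfV ?scale1r // intr_eq0.
rewrite rmorphD !rmorphM /= !map_polyC /= -deriv_map Fd_map e1 e2.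

rewrite -[RHS]mulr1 -hu; ring.
Qed.


Lemma Fp_int0 p (z : int) : prime p -> ((z%:~R : 'F_p) == 0) = (p %| `|z|)%N.
Proof.
move=> pp; have ch := pchar_Fp pp.
case: z => k.
  by rewrite (dvdn_pcharf ch).
by rewrite NegzE mulrNz oppr_eq0 (dvdn_pcharf ch).
Qed.

Lemma Fp_int_neq0 p (z : int) : prime p -> z != 0 -> (`|z| < p)%N -> (z%:~R : 'F_p) != 0.
Proof.
move=> pp z0 zp; rewrite Fp_int0 //; apply/negP => /dvdn_leq.
have : (0 < `|z|)%N by rewrite absz_gt0.
by move=> -> /(_ isT); rewrite leqNgt zp.
Qed.

Lemma ratmodp_div p (b c : int) : prime p -> ~~ (p %| `|c|)%N ->
  ratmodp p (b%:~R / c%:~R) = (b%:~R / c%:~R : 'F_p).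
Proof.
move=> pp pc; set q : rat := b%:~R / c%:~R.
have c0 : c != 0 by apply: contraNneq pc => ->; rewrite dvdn0.
have c0' : (c%:~R : rat) != 0 by rewrite intr_eq0.
have e : numq q * c = b * denq q.
  apply: (@intr_inj rat); rewrite !rmorphM /= numqE /q.
  by rewrite mulrAC divfK.
have e' : ((numq q)%:~R : 'F_p) * c%:~R = b%:~R * (denq q)%:~R.
  by rewrite -!rmorphM /= e.
have cp : (c%:~R : 'F_p) != 0 by rewrite Fp_int0.
have dp : ((denq q)%:~R : 'F_p) != 0.
  apply/negP => /eqP d0; move: e'; rewrite d0 mulr0 => /eqP; rewrite mulf_eq0 (negPf cp) orbF.
  rewrite !Fp_int0 // => pn; move: d0 => /eqP; rewrite Fp_int0 // => pd.
  have := coprime_num_den q; rewrite /coprime => /eqP g1.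
  have := introT andP (conj pn pd); rewrite -dvdn_gcd g1 dvdn1 => /eqP p1.
  by rewrite p1 in pp.
rewrite /ratmodp; apply/eqP; rewrite eqr_div // e'.
by [].
Qed.

Lemma ratmodp0 p : ratmodp p 0 = 0.
Proof. by rewrite /ratmodp mul0r. Qed.

Lemma redq_scale p (a : int) (P : {poly int}) : prime p -> ~~ (p %| `|a|)%N ->
  redq p ((a%:~R)^-1 *: map_poly intr P) = ((a%:~R)^-1 : 'F_p) *: redz p P.
Proof.
move=> pp pa; apply/polyP => i.
rewrite /redq /redz coef_map_id0 ?ratmodp0 // !coefZ !coef_map /=.
by rewrite mulrC ratmodp_div // mulrC.
Qed.

Lemma dvd_sq_root (K : fieldType) (S : {poly K}) x :
  ('X - x%:P) ^+ 2 %| S -> root S x && root S^`() x.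
Proof.
move/divpK => eS; set H := S %/ _ in eS; rewrite -eS.
rewrite derivM expr2 derivM derivXsubC mulr1 /root !hornerD !hornerM !hornerXsubC subrr.
by rewrite mul1r hornerD !hornerXsubC subrr !(mulr0, mul0r, addr0) eqxx.
Qed.

Definition intrF (p : nat) : {rmorphism int -> 'F_p} := intr.

Lemma sqf_modp (f : {poly int}) n p U V (D : int) : prime p -> D != 0 -> (`|D| < p)%N ->
  U * Fd f n + V * (Fd f n)^`() = D%:P ->
  forall x : 'F_p, ~~ (('X - x%:P) ^+ 2 %| Fd (redz p f) n).
Proof.
move=> pp D0 Dp e x; apply/negP => /dvd_sq_root /andP[r1 r2].
have e' := congr1 (map_poly (intrF p)) e.
move: e'; rewrite rmorphD !rmorphM /= -deriv_map Fd_map map_polyC /=.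
move/(congr1 (fun P => P.[x])); rewrite hornerD !hornerM hornerC.
move: r1 r2; rewrite /root => /eqP -> /eqP ->; rewrite !mulr0 addr0 => /esym/eqP.
by rewrite (negPf (Fp_int_neq0 pp D0 Dp)).
Qed.


Section Count.
Local Open Scope nat_scope.
Variable T : finType.
Variable h : T -> T.
Variable n : nat.
Hypothesis n0 : 0 < n.

Lemma iter_comm a b x : iter a h (iter b h x) = iter b h (iter a h x).
Proof. by rewrite -!iterD addnC. Qed.

Lemma hpP s : has_period h n s ->
  iter n h s = s /\ forall m, 0 < m < n -> iter m h s != s.
Proof.
case/and3P=> _ /eqP e /forallP H; split=> // m /andP[m0 mn].
by have := H (Ordinal mn); rewrite /= m0.
Qed.

Lemma iter_modn s k : has_period h n s -> iter k h s = iter (k %% n) h s.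
Proof. by case/hpP=> e _; apply: iter_mod. Qed.

Lemma hp_iter s k : has_period h n s -> has_period h n (iter k h s).
Proof.
move=> hs; have [e mn] := hpP hs; apply/and3P; split=> //.
  by rewrite iter_comm e.
apply/forallP => m; apply/implyP => m0; apply/negP => /eqP em.
set y := iter k h s in em.
have sy : iter (n - k %% n) h y = s.
  by rewrite /y (iter_modn k hs) -iterD subnK ?e // ltnW // ltn_mod.
have := mn m; rewrite m0 ltn_ord => /(_ isT); rewrite -sy iter_comm em.
by rewrite eqxx.
Qed.

Lemma fcon_iter s y : has_period h n s -> fconnect h s y ->
  exists2 k, k < n & y = iter k h s.
Proof.
move=> hs /iter_findex <-; exists (findex h s y %% n); first by rewrite ltn_mod.
exact: iter_modn.
Qed.

Lemma fcon_sym s y : has_period h n s -> fconnect h s y -> fconnect h y s.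
Proof.
move=> hs /(fcon_iter hs) [k kn ->]; have [e _] := hpP hs.
have E : iter (n - k) h (iter k h s) = s by rewrite -iterD subnK ?e // ltnW.
by rewrite -[X in fconnect h _ X]E; exact: fconnect_iter.
Qed.

Lemma card_orbit s : has_period h n s -> #|[set y | fconnect h s y]| = n.
Proof.
move=> hs; have -> : [set y | fconnect h s y] = [set iter (val k) h s | k : 'I_n].
  apply/setP => y; rewrite inE; apply/idP/imsetP.
    by case/(fcon_iter hs) => k kn ->; exists (Ordinal kn).
  by case=> k _ ->; exact: fconnect_iter.
rewrite card_imset ?card_ord //.
move=> i j /eqP; wlog ij : i j / i <= j.
  move=> W; case: (leqP i j) => [/W //|/ltnW ji]; rewrite eq_sym => /(W _ _ ji) ->.
  by [].
move=> /eqP e; apply/val_inj/eqP; rewrite eqn_leq ij /=; apply/negPn/negP; rewrite -ltnNge => lt.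
have := hp_iter i hs => /hpP [_ mn].
have := mn (j - i); rewrite subn_gt0 lt /= => /(_ (leq_ltn_trans (leq_subr _ _) (ltn_ord j))).
by rewrite -iterD subnK // e eqxx.
Qed.

Lemma card_periodic : #|[set x | has_period h n x]| = (#|ncycles h n| * n)%N.
Proof.
set D := [set x | has_period h n x].
have eP : ncycles h n = equivalence_partition (fconnect h) D.
  rewrite /ncycles /equivalence_partition; apply: eq_in_imset => s; rewrite inE => hs.
  apply/setP => y; rewrite !inE; apply/idP/andP => [c|[]//]; split=> //.
  by case/(fcon_iter hs): c => k _ ->; apply: hp_iter.
have Hp : partition (ncycles h n) D.
  rewrite eP; apply: equivalence_partitionP => x y z xD yD zD; split; first exact: connect0.
  rewrite inE in xD; move=> cxy; apply/idP/idP => c.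
    exact: connect_trans (fcon_sym xD cxy) c.
  exact: connect_trans cxy c.
rewrite (card_partition Hp) -sum_nat_const; apply: eq_bigr => A /imsetP [s].
by rewrite inE => hs ->; rewrite card_orbit.
Qed.
End Count.


Definition intQ : {rmorphism int -> rat} := intr.

Theorem mainTheorem6 (f : {poly int}) (n : nat) :
  (0 < n)%N ->
  iterp n (map_poly intr f : {poly algC}) - 'X != 0 ->
  (forall z : algC,
      ~~ ((('X - z%:P) ^+ 2) %| (iterp n (map_poly intr f : {poly algC}) - 'X))) ->
  forall j : nat, exists N : nat, forall p : nat, prime p -> (N < p)%N ->
    (#|ncycles (fun x : 'F_p => (redz p f).[x]) n| = j <->
     #|[set x : 'F_p | root (redq p (dynatomic (map_poly intr f : {poly rat}) n)) x]|
       = (j * n)%N).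
Proof.
move=> n0 _ H j.
have [U [V [D [D0 eD]]]] := bezoutZ H.
have ex := exact_dyn n0 H.
set Phi := dynatomic _ n in ex *.
have [phZ [a a0 ePhi]] := rat_poly_scale Phi.
exists (`|D| + `|a|)%N => p pp Np.
have Dp : (`|D| < p)%N by apply: leq_ltn_trans Np; apply: leq_addr.
have ap : (`|a| < p)%N by apply: leq_ltn_trans Np; apply: leq_addl.
have a0p : (a%:~R : 'F_p) != 0 by apply: Fp_int_neq0.
have pa : ~~ (p %| `|a|)%N by rewrite -Fp_int0.
set gp := redz p f.
have sq : forall x : 'F_p, ~~ (('X - x%:P) ^+ 2 %| Fd gp n) by apply: sqf_modp eD.
have ezi : phZ * QQ f n = a%:P * PP f n.
  apply: (@map_inj_poly _ _ (intr : int -> rat)); [exact: intr_inj | by []|].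
  rewrite !rmorphM /= map_polyC /=.
  have -> : map_poly intr (QQ f n) = QQ (map_poly intr f : {poly rat}) n by exact: (QQ_map intQ).
  have -> : map_poly intr (PP f n) = PP (map_poly intr f : {poly rat}) n by exact: (PP_map intQ).
  rewrite -ex ePhi -!mul_polyC mulrA mulrA -polyCM mulfV ?intr_eq0 //.
  by rewrite mul1r.
have ezp : redz p phZ * QQ gp n = (a%:~R)%:P * PP gp n.
  have := congr1 (map_poly (intrF p)) ezi; rewrite !rmorphM /= map_polyC /=.
  by rewrite (QQ_map (intrF p)) (PP_map (intrF p)).
have key : forall x : 'F_p, root (redq p Phi) x = has_period (fun y => gp.[y]) n x.
  move=> x; have [P0 Q0 em] := G_main n0 sq x.
  have phi0 : redz p phZ != 0.
    apply: contra_neq P0 => ph0; move: ezp; rewrite ph0 mul0r => /esym/eqP.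
    by rewrite mulf_eq0 polyC_eq0 (negPf a0p) => /eqP.
  have : mup x (redz p phZ * QQ gp n) = mup x ((a%:~R)%:P * PP gp n) by rewrite ezp.
  rewrite mupM // mupMr ?rootC // em addnC => /eqP; rewrite eqn_add2l => /eqP mphi.
  rewrite ePhi redq_scale // rootZ ?invr_eq0 //.
  rewrite -dvdp_XsubCl XsubC_dvd // mphi /has_period n0.
  by rewrite /perb; case: (_ && _).
have -> : [set x : 'F_p | root (redq p Phi) x] = [set x | has_period (fun y => gp.[y]) n x].
  by apply/setP => x; rewrite !inE key.
rewrite card_periodic //; split=> [->//|/eqP]; rewrite eqn_pmul2r // => /eqP.
by [].
Qed.
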